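(* Consider spin-1 operators on $\mathbb{C}^3$ (basis $\ket{+1},\ket{0},\ket{-1}$) and the twelve matrices $\pm S^x,\pm S^y,\pm S^z,\pm S^{\tilde x},\pm S^{\tilde y},\pm S^{\tilde z}$, where $S^x=\tfrac{1}{\sqrt2}\begin{pmatrix}0&1&0\\1&0&1\\0&1&0\end{pmatrix}$, $S^{\tilde x}=\tfrac{1}{\sqrt2}\begin{pmatrix}0&1&0\\1&0&-1\\0&-1&0\end{pmatrix}$, $S^y=\tfrac{1}{\sqrt2}\begin{pmatrix}0&-i&0\\i&0&-i\\0&i&0\end{pmatrix}$, $S^{\tilde y}=\tfrac{1}{\sqrt2}\begin{pmatrix}0&-i&0\\i&0&i\\0&-i&0\end{pmatrix}$, $S^z=\mathrm{diag}(1,0,-1)$, $S^{\tilde z}=\begin{pmatrix}0&0&-i\\0&0&0\\i&0&0\end{pmatrix}$. Each of these twelve matrices $F$ is unitarily similar to $S^z$; choose for each a unitary $U_F$ with $U_F^\dagger S^z U_F=F$. Let $$H=\sum_i\big[h_iS_i^z+D_i(S_i^z)^2\big]+\sum_{i\ne j}J_{ij}\Big[S_i^zS_j^z-\tfrac12 H^{XY,0+}_{ij}-\tfrac12 H^{XY,0-}_{ij}\Big]$$ on $(\mathbb{C}^3)^{\otimes n}$ with arbitrary real $h_i,D_i$ and real symmetric $J_{ij}$, where $H^{XY,0\pm}_{ij}=\ket{\pm1,0}\bra{0,\pm1}_{ij}+\mathrm{h.c.}$. Then $$\frac{1}{12}\sum_{F}(U_F^\dagger)^{\otimes n}H\,U_F^{\otimes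 n}=\frac{2}{3}\Big(\sum_i D_i\Big)\mathbb{1},$$ i.e. spending equal time in the twelve frames decouples both on-site disorder and the dipolar interaction (the result is independent of the choice of $U_F$). Moreover, each of the two sets $\{S^x,S^y,S^z\}$ and $\{S^{\tilde x},S^{\tilde y},S^{\tilde z}\}$ satisfies $\hat S_1^2+\hat S_2^2+\hat S_3^2=2\,\mathbb{1}$.
   Context: The frame associated with a control unitary $U$ is $U^\dagger S^z U$; by secularity of $H$ (it commutes with $D^{\otimes n}$ for every unitary $D$ diagonal in the $S^z$ basis), the transformed Hamiltonian $(U^\dagger)^{\otimes n}HU^{\otimes n}$ depends only on the frame. $J_{ij}$ summed over ordered pairs $i\neq j$. *)

(* Defs.v *)
(* complex numbers are modelled by algC (algebraic complex
   numbers, a numClosedFieldType with conjugation, 'i and sqrtC). *)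
From mathcomp Require Import all_boot all_order all_algebra all_field.
Set Implicit Arguments. Unset Strict Implicit. Unset Printing Implicit Defensive.
Import Order.TTheory GRing.Theory Num.Theory.
Local Open Scope ring_scope.

(* Single-site (spin-1) matrices, basis order: index 0 = |+1>, 1 = |0>, 2 = |-1>. *)
Definition mk3 (a00 a01 a02 a10 a11 a12 a20 a21 a22 : algC) : 'M[algC]_3 :=
  \matrix_(i < 3, j < 3)
    nth 0 (nth [::] [:: [:: a00; a01; a02]; [:: a10; a11; a12]; [:: a20; a21; a22]] i) j.

Definition r2 : algC := (sqrtC 2)^-1.

Definition Sx  : 'M[algC]_3 := mk3 0 r2 0  r2 0 r2  0 r2 0.
Definition Sxt : 'M[algC]_3 := mk3 0 r2 0  r2 0 (- r2)  0 (- r2) 0.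
Definition Sy  : 'M[algC]_3 :=
  mk3 0 (- 'i * r2) 0  ('i * r2) 0 (- 'i * r2)  0 ('i * r2) 0.
Definition Syt : 'M[algC]_3 :=
  mk3 0 (- 'i * r2) 0  ('i * r2) 0 ('i * r2)  0 (- 'i * r2) 0.
Definition Sz  : 'M[algC]_3 := mk3 1 0 0  0 0 0  0 0 (-1).
Definition Szt : 'M[algC]_3 := mk3 0 0 (- 'i)  0 0 0  'i 0 0.

Definition frames : seq 'M[algC]_3 :=
  [:: Sx; - Sx; Sy; - Sy; Sz; - Sz; Sxt; - Sxt; Syt; - Syt; Szt; - Szt].
Definition Fr (k : 'I_12) : 'M[algC]_3 := nth 0 frames k.

Definition dagger (U : 'M[algC]_3) : 'M[algC]_3 := (map_mx (fun x => x^*) U)^T.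
Definition unitary (U : 'M[algC]_3) : Prop := dagger U *m U = 1%:M.

(* Operators on (C^3)^{(x) n}: matrices indexed by basis configurations. *)
Definition cfg (n : nat) := {ffun 'I_n -> 'I_3}.
Definition Op (n : nat) := cfg n -> cfg n -> algC.

Definition opmul n (A B : Op n) : Op n := fun s t => \sum_(u : cfg n) A s u * B u t.
Definition opid n : Op n := fun s t => (s == t)%:R.

Definition tens n (U : 'M[algC]_3) : Op n := fun s t => \prod_(i < n) U (s i) (t i).

Definition site1 n (i : 'I_n) (A : 'M[algC]_3) : Op n :=
  fun s t => A (s i) (t i) * [forall k, (k != i) ==> (s k == t k)]%:R.

(* two-site operator B acting on sites (i, j), B a b c d = <a,b| B |c,d> *)
Definition site2 n (i j : 'I_n) (B : 'I_3 -> 'I_3 -> 'I_3 -> 'I_3 -> algC) : Op n :=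
  fun s t => B (s i) (s j) (t i) (t j)
             * [forall k, ((k != i) && (k != j)) ==> (s k == t k)]%:R.

(* H^{XY,0 pm} = |pm1,0><0,pm1| + h.c.; x = 0 for +1, x = 2 for -1 *)
Definition hxy (x : nat) (a b c d : 'I_3) : algC :=
  [&& a == x :> nat, b == 1%N :> nat, c == 1%N :> nat & d == x :> nat]%:R
  + [&& a == 1%N :> nat, b == x :> nat, c == x :> nat & d == 1%N :> nat]%:R.

Definition Ham n (h D : 'I_n -> algC) (J : 'I_n -> 'I_n -> algC) : Op n :=
  fun s t =>
    \sum_(i < n) (h i * site1 i Sz s t + D i * site1 i (Sz *m Sz) s t)
  + \sum_(i < n) \sum_(j < n | j != i)
      J i j * (opmul (site1 i Sz) (site1 j Sz) s t
               - 2^-1 * site2 i j (hxy 0) s t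
               - 2^-1 * site2 i j (hxy 2) s t).

Definition frameH n (U : 'M[algC]_3) (H : Op n) : Op n :=
  opmul (opmul (@tens n (dagger U)) H) (@tens n U).

(* Main.v *)
Require Import Defs.
From mathcomp Require Import all_boot all_order all_algebra all_field.
From mathcomp Require Import ring.
From Stdlib Require Import FunctionalExtensionality.
Import Order.TTheory GRing.Theory Num.Theory.
Local Open Scope ring_scope.

Lemma mk3E a00 a01 a02 a10 a11 a12 a20 a21 a22 (i j : 'I_3) :
  mk3 a00 a01 a02 a10 a11 a12 a20 a21 a22 i j =
  match val i, val j with
  | 0, 0 => a00 | 0, 1 => a01 | 0, _ => a02
  | 1, 0 => a10 | 1, 1 => a11 | 1, _ => a12
  | _, 0 => a20 | _, 1 => a21 | _, _ => a22 end.
Proof.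
rewrite /mk3 mxE.
by case: i => [[|[|[|i]]] Hi] //; case: j => [[|[|[|j]]] Hj].
Qed.

Lemma mk3_mul a00 a01 a02 a10 a11 a12 a20 a21 a22 b00 b01 b02 b10 b11 b12 b20 b21 b22 :
  mk3 a00 a01 a02 a10 a11 a12 a20 a21 a22 *m mk3 b00 b01 b02 b10 b11 b12 b20 b21 b22 =
  mk3 (a00*b00+a01*b10+a02*b20) (a00*b01+a01*b11+a02*b21) (a00*b02+a01*b12+a02*b22)
      (a10*b00+a11*b10+a12*b20) (a10*b01+a11*b11+a12*b21) (a10*b02+a11*b12+a12*b22)
      (a20*b00+a21*b10+a22*b20) (a20*b01+a21*b11+a22*b21) (a20*b02+a21*b12+a22*b22).
Proof.
apply/matrixP => i j; rewrite [RHS]mk3E mxE !big_ord_recr big_ord0 /= !mk3E add0r.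
by case: i => [[|[|[|i]]] Hi] //; case: j => [[|[|[|j]]] Hj].
Qed.

Lemma mk3_add a00 a01 a02 a10 a11 a12 a20 a21 a22 b00 b01 b02 b10 b11 b12 b20 b21 b22 :
  mk3 a00 a01 a02 a10 a11 a12 a20 a21 a22 + mk3 b00 b01 b02 b10 b11 b12 b20 b21 b22 =
  mk3 (a00+b00) (a01+b01) (a02+b02) (a10+b10) (a11+b11) (a12+b12) (a20+b20) (a21+b21) (a22+b22).
Proof.
apply/matrixP => i j; rewrite [RHS]mk3E mxE !mk3E.
by case: i => [[|[|[|i]]] Hi] //; case: j => [[|[|[|j]]] Hj].
Qed.

Lemma mk3_opp a00 a01 a02 a10 a11 a12 a20 a21 a22 :
  - mk3 a00 a01 a02 a10 a11 a12 a20 a21 a22 =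
  mk3 (-a00) (-a01) (-a02) (-a10) (-a11) (-a12) (-a20) (-a21) (-a22).
Proof.
apply/matrixP => i j; rewrite [RHS]mk3E mxE !mk3E.
by case: i => [[|[|[|i]]] Hi] //; case: j => [[|[|[|j]]] Hj].
Qed.

Lemma mk3_scalar (a : algC) : a%:M = mk3 a 0 0 0 a 0 0 0 a.
Proof.
apply/matrixP => i j; rewrite [RHS]mk3E mxE.
by case: i => [[|[|[|i]]] Hi] //; case: j => [[|[|[|j]]] Hj].
Qed.

Lemma dagger_mk3 a00 a01 a02 a10 a11 a12 a20 a21 a22 :
  dagger (mk3 a00 a01 a02 a10 a11 a12 a20 a21 a22) =
  mk3 a00^* a10^* a20^* a01^* a11^* a21^* a02^* a12^* a22^*.
Proof.
apply/matrixP => i j; rewrite [RHS]mk3E /dagger mxE mxE mk3E.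
by case: i => [[|[|[|i]]] Hi] //; case: j => [[|[|[|j]]] Hj].
Qed.

Lemma mk3_congr a00 a01 a02 a10 a11 a12 a20 a21 a22 b00 b01 b02 b10 b11 b12 b20 b21 b22 :
  a00 = b00 -> a01 = b01 -> a02 = b02 -> a10 = b10 -> a11 = b11 -> a12 = b12 ->
  a20 = b20 -> a21 = b21 -> a22 = b22 ->
  mk3 a00 a01 a02 a10 a11 a12 a20 a21 a22 = mk3 b00 b01 b02 b10 b11 b12 b20 b21 b22.
Proof. by move=> -> -> -> -> -> -> -> -> ->. Qed.

Lemma r2sq : r2 * r2 = 2^-1.
Proof. by rewrite /r2 -invfM -expr2 sqrtCK. Qed.
Lemma r2sq' : r2 * r2 * 2 = 1.
Proof. by rewrite r2sq mulVf // pnatr_eq0. Qed.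
Lemma isq : 'i * 'i = -1 :> algC.
Proof. by rewrite -expr2 sqrCi. Qed.
Lemma r2conj : r2^* = r2.
Proof. by apply: geC0_conj; rewrite /r2 invr_ge0 sqrtC_ge0 ler0n. Qed.

Lemma partA : Sx *m Sx + Sy *m Sy + Sz *m Sz = 2%:M.
Proof.
rewrite /Sx /Sy /Sz !mk3_mul !mk3_add mk3_scalar.
apply: mk3_congr; ring: r2sq' isq.
Qed.
Lemma cM (x y : algC) : (x * y)^* = x^* * y^*.
Proof. exact: rmorphM. Qed.
Lemma cN (x : algC) : (- x)^* = - x^*.
Proof. exact: rmorphN. Qed.
Lemma ss : sqrtC 2 * sqrtC 2 = 2 :> algC. Proof. by rewrite -expr2 sqrtCK. Qed.
Lemma s0 : sqrtC 2 != 0 :> algC. Proof. by rewrite sqrtC_eq0 pnatr_eq0. Qed.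
Ltac fin := try exact s0; try done.
Ltac ringc := lazymatch goal with
  | |- context [r2] => rewrite ?/r2; lazymatch goal with
       | |- context ['i] => field: ss isq; fin
       | _ => field: ss; fin end
  | _ => lazymatch goal with
       | |- context ['i] => field: isq; fin
       | _ => field; fin end
  end.

Lemma partB : Sxt *m Sxt + Syt *m Syt + Szt *m Szt = 2%:M.
Proof.
rewrite /Sxt /Syt /Szt !mk3_mul !mk3_add mk3_scalar.
match goal with |- ?A = ?B => change (@eq 'M[algC]_3 A B) end.
apply: mk3_congr; ringc.
Qed.


Ltac mxeq := match goal with |- ?A = ?B => change (@eq 'M[algC]_3 A B) end;
   apply: mk3_congr; ringc.

Local Notation hf := (2^-1 : algC).

Lemma GSx : Sx *m Sx = mk3 hf 0 hf 0 1 0 hf 0 hf.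
Proof. rewrite /Sx mk3_mul; mxeq. Qed.
Lemma GSy : Sy *m Sy = mk3 hf 0 (-hf) 0 1 0 (-hf) 0 hf.
Proof. rewrite /Sy mk3_mul; mxeq. Qed.
Lemma GSz : Sz *m Sz = mk3 1 0 0 0 0 0 0 0 1.
Proof. rewrite /Sz mk3_mul; mxeq. Qed.
Lemma GSxt : Sxt *m Sxt = mk3 hf 0 (-hf) 0 1 0 (-hf) 0 hf.
Proof. rewrite /Sxt mk3_mul; mxeq. Qed.
Lemma GSyt : Syt *m Syt = mk3 hf 0 hf 0 1 0 hf 0 hf.
Proof. rewrite /Syt mk3_mul; mxeq. Qed.
Lemma GSzt : Szt *m Szt = mk3 1 0 0 0 0 0 0 0 1.
Proof. rewrite /Szt mk3_mul; mxeq. Qed.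

Lemma sumFr : \sum_(k < 12) Fr k = 0.
Proof.
rewrite !big_ord_recr big_ord0 /= /Fr /=.
by rewrite add0r !addrK subrr.
Qed.

Lemma sumF2 : \sum_(k < 12) (Fr k *m Fr k) = 8%:M.
Proof.
rewrite !big_ord_recr big_ord0 /= /Fr /= !mulNmx !mulmxN !opprK.
rewrite GSx GSy GSz GSxt GSyt GSzt add0r !mk3_add mk3_scalar; mxeq.
Qed.

Definition Phi (F : 'M[algC]_3) (p q r s : 'I_3) : algC :=
  F p q * F r s - 2^-1 * ((F *m F) p s * ((1%:M - F *m F) r q)
                          + (1%:M - F *m F) p s * (F *m F) r q).

Lemma PhiN F p q r s : Phi (- F) p q r s = Phi F p q r s.
Proof. by rewrite /Phi mulNmx mulmxN opprK !mxE mulrNN. Qed.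

Lemma sumPhi p q r s : \sum_(k < 12) Phi (Fr k) p q r s = 0.
Proof.
rewrite !big_ord_recr big_ord0 /= /Fr /= !PhiN /Phi.
rewrite GSx GSy GSz GSxt GSyt GSzt !mk3_scalar !mk3_opp !mk3_add.
rewrite /Sx /Sy /Sz /Sxt /Syt /Szt !mk3E.
case: p => [[|[|[|p]]] Hp] //; case: q => [[|[|[|q]]] Hq] //;
case: r => [[|[|[|r]]] Hr] //; case: s => [[|[|[|s]]] Hs] //= ; ringc.
Qed.

Local Notation hh := (r2 * r2).
Ltac mksolve := rewrite /unitary ?dagger_mk3 ?mk3_scalar ?mk3_opp /Sx /Sy /Sz /Sxt /Syt /Szt
   ?mk3_opp ?mk3_scalar !mk3_mul ?mk3_opp;
   rewrite ?(cM, cN, conjCi, r2conj, conjC0, conjC1);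
   match goal with |- ?A = ?B => change (@eq 'M[algC]_3 A B) end;
   apply: mk3_congr; ringc.

Lemma partU (k : 'I_12) : exists U : 'M[algC]_3, unitary U /\ dagger U *m Sz *m U = Fr k.
Proof.

case: k => [[|[|[|[|[|[|[|[|[|[|[|[|k]]]]]]]]]]]] Hk] //; rewrite /Fr /=.
- exists (mk3 hh r2 hh r2 0 (-r2) hh (-r2) hh); split; mksolve.
- exists (mk3 hh (-r2) hh r2 0 (-r2) hh r2 hh); split; mksolve.
- exists (mk3 hh (-'i*r2) (-hh) r2 0 r2 hh ('i*r2) (-hh)); split; mksolve.
- exists (mk3 hh ('i*r2) (-hh) r2 0 r2 hh (-'i*r2) (-hh)); split; mksolve.
- exists (mk3 1 0 0 0 1 0 0 0 1); split; mksolve.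
- exists (mk3 0 0 1 0 1 0 1 0 0); split; mksolve.
- exists (mk3 hh r2 (-hh) r2 0 r2 hh (-r2) (-hh)); split; mksolve.
- exists (mk3 hh (-r2) (-hh) r2 0 r2 hh r2 (-hh)); split; mksolve.
- exists (mk3 hh (-'i*r2) hh r2 0 (-r2) hh ('i*r2) hh); split; mksolve.
- exists (mk3 hh ('i*r2) hh r2 0 (-r2) hh (-'i*r2) hh); split; mksolve.
- exists (mk3 r2 0 (-'i*r2) 0 1 0 r2 0 ('i*r2)); split; mksolve.
- exists (mk3 r2 0 ('i*r2) 0 1 0 r2 0 (-'i*r2)); split; mksolve.
Qed.

Set Implicit Arguments. Unset Strict Implicit. Unset Printing Implicit Defensive.

Definition tensL n (M : 'I_n -> 'M[algC]_3) : Op n :=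
  fun s t => \prod_(k < n) M k (s k) (t k).

Lemma tensL_mul n (M N : 'I_n -> 'M[algC]_3) :
  opmul (tensL M) (tensL N) = tensL (fun k => M k *m N k).
Proof.
apply: functional_extensionality => s; apply: functional_extensionality => t.
rewrite /opmul /tensL.
under eq_bigr => u _ do rewrite -big_split /=.
rewrite -(bigA_distr_bigA (fun k j => M k (s k) j * N k j (t k))).
by apply: eq_bigr => k _; rewrite mxE.
Qed.

Lemma frameH_tensL n U (M : 'I_n -> 'M[algC]_3) :
  frameH U (tensL M) = tensL (fun k => dagger U *m M k *m U).
Proof. by rewrite /frameH (_ : @tens n (dagger U) = tensL (fun _ => dagger U)) //
  tensL_mul (_ : @tens n U = tensL (fun _ => U)) // tensL_mul. Qed.

Lemma frameHE n U (X : Op n) s t :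
  frameH U X s t = \sum_v \sum_u @tens n (dagger U) s u * X u v * @tens n U v t.
Proof.
rewrite /frameH /opmul; apply: eq_bigr => v _; by rewrite big_distrl.
Qed.

Lemma frameH_add n U (A B : Op n) :
  frameH U (fun s t => A s t + B s t) = fun s t => frameH U A s t + frameH U B s t.
Proof.
apply: functional_extensionality => s; apply: functional_extensionality => t.
rewrite !frameHE -big_split; apply: eq_bigr => v _; rewrite -big_split.
by apply: eq_bigr => u _; rewrite mulrDr mulrDl.
Qed.

Lemma frameH_sub n U (A B : Op n) :
  frameH U (fun s t => A s t - B s t) = fun s t => frameH U A s t - frameH U B s t.
Proof.
apply: functional_extensionality => s; apply: functional_extensionality => t.
rewrite !frameHE -sumrB; apply: eq_bigr => v _; rewrite -sumrB.
by apply: eq_bigr => u _; rewrite mulrBr mulrBl.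
Qed.

Lemma frameH_scale n U c (A : Op n) :
  frameH U (fun s t => c * A s t) = fun s t => c * frameH U A s t.
Proof.
apply: functional_extensionality => s; apply: functional_extensionality => t.
rewrite !frameHE big_distrr; apply: eq_bigr => v _; rewrite big_distrr.
by apply: eq_bigr => u _ /=; ring.
Qed.

Lemma frameH_sum n U (I : Type) (r : seq I) (P : pred I) (G : I -> Op n) :
  frameH U (fun s t => \sum_(x <- r | P x) G x s t) =
  fun s t => \sum_(x <- r | P x) frameH U (G x) s t.
Proof.
apply: functional_extensionality => s; apply: functional_extensionality => t.
rewrite frameHE.
transitivity (\sum_v \sum_(x <- r | P x) \sum_u
   @tens n (dagger U) s u * G x u v * @tens n U v t).
  apply: eq_bigr => v _.
  transitivity (\sum_u \sum_(x <- r | P x)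
   @tens n (dagger U) s u * G x u v * @tens n U v t).
    apply: eq_bigr => u _.
    by rewrite /= mulr_sumr mulr_suml.
  by rewrite exchange_big.
rewrite exchange_big /=; apply: eq_bigr => x _; by rewrite frameHE.
Qed.

Definition M1 n (i : 'I_n) (A : 'M[algC]_3) : 'I_n -> 'M[algC]_3 :=
  fun k => if k == i then A else 1%:M.
Definition M2 n (i j : 'I_n) (A B : 'M[algC]_3) : 'I_n -> 'M[algC]_3 :=
  fun k => if k == i then A else if k == j then B else 1%:M.

Lemma prod_ind n (P : pred 'I_n) (s t : cfg n) :
  \prod_(k | P k) (1%:M : 'M[algC]_3) (s k) (t k) = [forall k, P k ==> (s k == t k)]%:R.
Proof.
case: (boolP [forall k, _]) => H.
  rewrite big1 // => k Pk; rewrite mxE.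
  by move/forallP: H => /(_ k); rewrite Pk /= => /eqP ->; rewrite eqxx.
move: H; rewrite negb_forall => /existsP [k]; rewrite negb_imply => /andP [Pk Hk].
by rewrite (bigD1 k) //= mxE (negbTE Hk) mul0r.
Qed.

Lemma tensL_M1 n (i : 'I_n) A s t :
  tensL (M1 i A) s t = A (s i) (t i) * [forall k, (k != i) ==> (s k == t k)]%:R.
Proof.
rewrite /tensL (bigD1 i) //= /M1 eqxx; congr (_ * _).
rewrite -prod_ind; apply: eq_bigr => k /negbTE Hk; by rewrite Hk.
Qed.

Lemma tensL_M2 n (i j : 'I_n) A B s t : j != i ->
  tensL (M2 i j A B) s t = A (s i) (t i) * B (s j) (t j)
     * [forall k, ((k != i) && (k != j)) ==> (s k == t k)]%:R.
Proof.
move=> Hji.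
rewrite /tensL (bigD1 i) //= (bigD1 j) //= /M2 eqxx (negbTE Hji) eqxx mulrA.
congr (_ * _).
rewrite -prod_ind; apply: eq_bigr => k /andP [Hki Hkj].
by rewrite (negbTE Hki) (negbTE Hkj).
Qed.

Lemma site1E n (i : 'I_n) A : site1 i A = tensL (M1 i A).
Proof.
apply: functional_extensionality => s; apply: functional_extensionality => t.
by rewrite tensL_M1.
Qed.

Lemma site2_hxy n (i j : 'I_n) (X O : 'I_3) s t : j != i -> val O = 1%N ->
  site2 i j (hxy X) s t =
  tensL (M2 i j (delta_mx X O) (delta_mx O X)) s t
  + tensL (M2 i j (delta_mx O X) (delta_mx X O)) s t.
Proof.
move=> Hji HO.
rewrite !tensL_M2 // /site2 -mulrDl; congr (_ * _).
rewrite /hxy !mxE -!natrM !mulnb.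
have EO : forall a : 'I_3, (a == O) = (a == 1%N :> nat).
  by move=> a; rewrite -val_eqE HO.
rewrite !EO.
congr (_%:R + _%:R); congr (nat_of_bool _);
  (apply/and4P/and3P => [[H1 H2 H3 H4]|[/andP[H1 H3] H2 H4]];
   [split; [apply/andP; split|..] | split]; assumption).
Qed.

Definition o0 : 'I_3 := @Ordinal 3 0 isT.
Definition o1 : 'I_3 := @Ordinal 3 1 isT.
Definition o2 : 'I_3 := @Ordinal 3 2 isT.

Definition HamG n (T : ('I_n -> 'M[algC]_3) -> Op n)
   (h D : 'I_n -> algC) (J : 'I_n -> 'I_n -> algC) : Op n :=
  fun s t =>
    \sum_(i < n) (h i * T (M1 i Sz) s t + D i * T (M1 i (Sz *m Sz)) s t)
  + \sum_(i < n) \sum_(j < n | j != i)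
      J i j * (T (fun k => M1 i Sz k *m M1 j Sz k) s t
               - 2^-1 * (T (M2 i j (delta_mx o0 o1) (delta_mx o1 o0)) s t
                         + T (M2 i j (delta_mx o1 o0) (delta_mx o0 o1)) s t)
               - 2^-1 * (T (M2 i j (delta_mx o2 o1) (delta_mx o1 o2)) s t
                         + T (M2 i j (delta_mx o1 o2) (delta_mx o2 o1)) s t)).

Lemma Ham_G n h D J : Ham h D J = HamG (@tensL n) h D J.
Proof.
apply: functional_extensionality => s; apply: functional_extensionality => t.
rewrite /Ham /HamG; congr (_ + _).
  by apply: eq_bigr => i _; rewrite !site1E.
apply: eq_bigr => i _; apply: eq_bigr => j Hji.
by rewrite !site1E tensL_mul (@site2_hxy _ _ _ o0 o1) // (@site2_hxy _ _ _ o2 o1).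
Qed.

Definition cj n (U : 'M[algC]_3) (M : 'I_n -> 'M[algC]_3) : 'I_n -> 'M[algC]_3 :=
  fun k => dagger U *m M k *m U.

Lemma frameH_G n U h D J :
  frameH U (HamG (@tensL n) h D J) = HamG (fun M => tensL (cj U M)) h D J.
Proof.
rewrite /HamG frameH_add !frameH_sum.
apply: functional_extensionality => s; apply: functional_extensionality => t.
congr (_ + _).
  apply: eq_bigr => i _.
  by rewrite frameH_add !frameH_scale !frameH_tensL.
apply: eq_bigr => i _; rewrite frameH_sum; apply: eq_bigr => j _.
by rewrite frameH_scale !frameH_sub !frameH_scale !frameH_add !frameH_tensL.
Qed.

Definition C (U A : 'M[algC]_3) := dagger U *m A *m U.

Lemma unitaryC U : unitary U -> U *m dagger U = 1%:M.
Proof. exact: mulmx1C. Qed.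

Lemma cjM1 n U (i : 'I_n) A : unitary U -> cj U (M1 i A) = M1 i (C U A).
Proof.
move=> HU; apply: functional_extensionality => k; rewrite /cj /M1 /C.
by case: (k == i) => //; rewrite mulmx1 HU.
Qed.

Lemma cjM2 n U (i j : 'I_n) A B : unitary U -> cj U (M2 i j A B) = M2 i j (C U A) (C U B).
Proof.
move=> HU; apply: functional_extensionality => k; rewrite /cj /M2 /C.
by case: (k == i) => //; case: (k == j) => //; rewrite mulmx1 HU.
Qed.

Lemma cjM11 n U (i j : 'I_n) A B : j != i -> unitary U ->
  cj U (fun k => M1 i A k *m M1 j B k) = M2 i j (C U A) (C U B).
Proof.
move=> Hji HU; apply: functional_extensionality => k; rewrite /cj /M1 /M2 /C.
case: (eqVneq k i) => [->|Hki]; first by rewrite eq_sym (negbTE Hji) mulmx1.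
rewrite ?(negbTE Hki).
case: (k == j); first by rewrite mul1mx.
by rewrite mulmx1 mulmx1 HU.
Qed.

Lemma mul_delta_r (A : 'M[algC]_3) (a c p x : 'I_3) :
  (A *m (delta_mx a c : 'M[algC]_3)) p x = A p a * (x == c)%:R.
Proof.
rewrite mxE (bigD1 a) //= big1 ?addr0 => [|y /negbTE Hy]; rewrite mxE.
  by rewrite eqxx.
by rewrite Hy mulr0.
Qed.

Lemma Vent U (a c p q : 'I_3) : C U (delta_mx a c) p q = (U a p)^* * U c q.
Proof.
rewrite /C mxE (bigD1 c) //= big1 ?addr0 => [|x /negbTE Hx]; rewrite mul_delta_r.
  by rewrite eqxx mulr1 /dagger !mxE.
by rewrite Hx mulr0 mul0r.
Qed.

Lemma Sz2_delta : Sz *m Sz = delta_mx o0 o0 + delta_mx o2 o2.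
Proof.
rewrite GSz; apply/matrixP => i j; rewrite mk3E !mxE.
by case: i => [[|[|[|i]]] Hi] //; case: j => [[|[|[|j]]] Hj] //; rewrite /= ?addr0 ?add0r.
Qed.

Lemma one_delta : 1%:M = delta_mx o0 o0 + delta_mx o1 o1 + delta_mx o2 o2 :> 'M[algC]_3.
Proof.
apply/matrixP => i j; rewrite !mxE.
by case: i => [[|[|[|i]]] Hi] //; case: j => [[|[|[|j]]] Hj] //; rewrite /= ?addr0 ?add0r.
Qed.

Lemma CD U A B : C U (A + B) = C U A + C U B.
Proof. by rewrite /C mulmxDr mulmxDl. Qed.

Lemma addE (A B : 'M[algC]_3) x y : (A + B) x y = A x y + B x y.
Proof. by rewrite mxE. Qed.

Lemma CSz2 U : unitary U -> C U Sz *m C U Sz = C U (Sz *m Sz).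
Proof.
move=> HU; rewrite /C !mulmxA -(mulmxA _ U) unitaryC // mulmx1.
by rewrite -[in RHS]mulmxA -!mulmxA.
Qed.

Lemma PsiPhi U p q r s : unitary U ->
  C U Sz p q * C U Sz r s
  - 2^-1 * (C U (delta_mx o0 o1) p q * C U (delta_mx o1 o0) r s
            + C U (delta_mx o1 o0) p q * C U (delta_mx o0 o1) r s)
  - 2^-1 * (C U (delta_mx o2 o1) p q * C U (delta_mx o1 o2) r s
            + C U (delta_mx o1 o2) p q * C U (delta_mx o2 o1) r s)
  = Phi (C U Sz) p q r s.
Proof.
move=> HU.
have E1 : 1%:M - C U Sz *m C U Sz = C U (delta_mx o1 o1).
  rewrite CSz2 // Sz2_delta.
  have -> : (1%:M : 'M[algC]_3) = C U 1%:M by rewrite /C mulmx1 HU.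
  rewrite one_delta /C.
  rewrite !mulmxDr !mulmxDl; apply/matrixP => x y; rewrite !mxE.
  ring.
have CD : forall A B, C U (A + B) = C U A + C U B.
  by move=> A B; rewrite /C mulmxDr mulmxDl.
have addE : forall (A B : 'M[algC]_3) x y, (A + B) x y = A x y + B x y.
  by move=> A B x y; rewrite mxE.
rewrite /Phi E1 CSz2 // Sz2_delta CD !addE !Vent.
ring.
Qed.

Definition ind1 n (i : 'I_n) (s t : cfg n) : algC :=
  [forall k, (k != i) ==> (s k == t k)]%:R.
Definition ind2 n (i j : 'I_n) (s t : cfg n) : algC :=
  [forall k, ((k != i) && (k != j)) ==> (s k == t k)]%:R.

Lemma HamG_eval n U h D J (s t : cfg n) : unitary U ->
  HamG (fun M => tensL (cj U M)) h D J s t =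
  \sum_(i < n) (h i * C U Sz (s i) (t i) + D i * (C U Sz *m C U Sz) (s i) (t i)) * ind1 i s t
  + \sum_(i < n) \sum_(j < n | j != i) J i j *
       (Phi (C U Sz) (s i) (t i) (s j) (t j) * ind2 i j s t).
Proof.
move=> HU; rewrite /HamG; congr (_ + _).
  apply: eq_bigr => i _.
  by rewrite !cjM1 // !tensL_M1 CSz2 // mulrDl !mulrA.
apply: eq_bigr => i _; apply: eq_bigr => j Hji.
rewrite cjM11 // !cjM2 // !tensL_M2 // -PsiPhi //; congr (_ * _).
rewrite /ind2; ring.
Qed.

Lemma ind1_opid n (i : 'I_n) (s t : cfg n) :
  (1%:M : 'M[algC]_3) (s i) (t i) * ind1 i s t = opid s t.
Proof.
transitivity (\prod_(k < n) (1%:M : 'M[algC]_3) (s k) (t k)).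
  by rewrite (bigD1 i) //= /ind1 prod_ind.
rewrite prod_ind /opid; congr (_%:R); congr (nat_of_bool _).
apply/forallP/eqP => [H|->] //; last by move=> k; rewrite eqxx.
by apply/ffunP => k; apply/eqP; exact: H.
Qed.

Lemma sumFr_e p q : \sum_(k < 12) Fr k p q = 0.
Proof. by rewrite -summxE sumFr mxE. Qed.

Lemma sumF2_e p q : \sum_(k < 12) (Fr k *m Fr k) p q = 8 * (1%:M : 'M[algC]_3) p q.
Proof. by rewrite -summxE sumF2 !mxE; case: (p == q); rewrite ?mulr1 ?mulr0. Qed.

Lemma part2 n (h D : 'I_n -> algC) (J : 'I_n -> 'I_n -> algC) (U : 'I_12 -> 'M[algC]_3) :
  (forall k, unitary (U k) /\ dagger (U k) *m Sz *m U k = Fr k) ->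
  (fun s t => 12^-1 * \sum_(k < 12) frameH (U k) (Ham h D J) s t)
     = (fun s t => 2 / 3 * (\sum_(i < n) D i) * @opid n s t).
Proof.
move=> HU.
apply: functional_extensionality => s; apply: functional_extensionality => t.
rewrite Ham_G.
transitivity (12^-1 * \sum_(k < 12)
  (\sum_(i < n) (h i * Fr k (s i) (t i) + D i * (Fr k *m Fr k) (s i) (t i)) * ind1 i s t
  + \sum_(i < n) \sum_(j < n | j != i) J i j *
       (Phi (Fr k) (s i) (t i) (s j) (t j) * ind2 i j s t))).
  congr (_ * _); apply: eq_bigr => k _.
  have [Hu HF] := HU k.
  by rewrite frameH_G HamG_eval // /C HF.
rewrite big_split /=.
have E1 : \sum_(k < 12) \sum_(i < n)
   (h i * Fr k (s i) (t i) + D i * (Fr k *m Fr k) (s i) (t i)) * ind1 i s t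
   = \sum_(i < n) D i * 8 * opid s t.
  rewrite exchange_big; apply: eq_bigr => i _.
  rewrite -mulr_suml big_split /= -!mulr_sumr sumFr_e sumF2_e mulr0 add0r -(ind1_opid i).
  ring.
have E2 : \sum_(k < 12) \sum_(i < n) \sum_(j < n | j != i) J i j *
       (Phi (Fr k) (s i) (t i) (s j) (t j) * ind2 i j s t) = 0.
  rewrite exchange_big; apply: big1 => i _.
  rewrite exchange_big /=; apply: big1 => j _.
  by rewrite -mulr_sumr -mulr_suml sumPhi mul0r mulr0.
rewrite E1 E2 addr0 -!mulr_suml.
by field.
Qed.

Unset Implicit Arguments.

Theorem mainTheorem4 :
  (forall k : 'I_12, exists U : 'M[algC]_3, unitary U /\ dagger U *m Sz *m U = Fr k)
  /\
  (forall (n : nat) (h D : 'I_n -> algC) (J : 'I_n -> 'I_n -> algC)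
          (U : 'I_12 -> 'M[algC]_3),
     (forall i, h i \is Num.real) -> (forall i, D i \is Num.real) ->
     (forall i j, J i j \is Num.real) -> (forall i j, J i j = J j i) ->
     (forall k, unitary (U k) /\ dagger (U k) *m Sz *m U k = Fr k) ->
     (fun s t => 12^-1 * \sum_(k < 12) frameH (U k) (Ham h D J) s t)
     = (fun s t => 2 / 3 * (\sum_(i < n) D i) * @opid n s t))
  /\ Sx *m Sx + Sy *m Sy + Sz *m Sz = 2%:M
  /\ Sxt *m Sxt + Syt *m Syt + Szt *m Szt = 2%:M.
Proof.
split; first exact: partU.
split; first by move=> n h D J U _ _ _ _ HU; exact: part2.
split; [exact: partA | exact: partB].
Qed.
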